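(* Let $K$ be a compact Hausdorff space. Then $n_L(C(K))=1$, in both the real and the complex case.
   Context: $C(K)$ is the Banach space of continuous scalar-valued functions on $K$ with the supremum norm. For a Banach space $X$: $\mathrm{Lip}_0(X)$ is the set of Lipschitz maps $T:X\to X$ with $T(0)=0$, with $\|T\|_L=\sup\{\|Tx-Ty\|/\|x-y\|: x\neq y\}$; $D(x)=\{x^*\in X^*: x^*(x)=\|x^*\|\|x\|=\|x\|^2\}$; $\omega(T)=\sup\{|f(Tx-Ty)|/\|x-y\|^2: x\neq y,\ f\in D(x-y)\}$; $n_L(X)=\inf\{\omega(T): T\in\mathrm{Lip}_0(X),\ \|T\|_L=1\}$. *)

(* Defs.v *)
From Stdlib Require Import Reals Lra List ClassicalEpsilon.
Open Scope R_scope.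

(** * Extended reals, suprema and infima (always exist in [-oo,+oo]) *)
Inductive Rbar : Type := Fin (r : R) | PInf | MInf.

Definition Rbar_le (x y : Rbar) : Prop :=
  match x, y with
  | MInf, _ => True
  | _, PInf => True
  | Fin a, Fin b => a <= b
  | _, _ => False
  end.

Definition Rbar_is_sup (S : Rbar -> Prop) (l : Rbar) : Prop :=
  (forall x, S x -> Rbar_le x l) /\
  (forall u, (forall x, S x -> Rbar_le x u) -> Rbar_le l u).

Definition Rbar_is_inf (S : Rbar -> Prop) (l : Rbar) : Prop :=
  (forall x, S x -> Rbar_le l x) /\
  (forall u, (forall x, S x -> Rbar_le u x) -> Rbar_le u l).

Definition Sup (S : Rbar -> Prop) : Rbar :=
  epsilon (inhabits PInf) (Rbar_is_sup S).
Definition Inf (S : Rbar -> Prop) : Rbar :=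
  epsilon (inhabits PInf) (Rbar_is_inf S).

Definition RSup (S : R -> Prop) : Rbar := Sup (fun x => exists r, x = Fin r /\ S r).

Definition real_of (x : Rbar) : R := match x with Fin r => r | _ => 0 end.

Record Cplx : Type := mkC { Re : R; Im : R }.
Definition Cadd (z w : Cplx) := mkC (Re z + Re w) (Im z + Im w).
Definition Copp (z : Cplx) := mkC (- Re z) (- Im z).
Definition Cmul (z w : Cplx) :=
  mkC (Re z * Re w - Im z * Im w) (Re z * Im w + Im z * Re w).
Definition Cabs (z : Cplx) := sqrt (Re z ^ 2 + Im z ^ 2).
Definition CofR (r : R) := mkC r 0.

Inductive field_kind : Type := RealCase | ComplexCase.

Definition scal (k : field_kind) : Type :=
  match k with RealCase => R | ComplexCase => Cplx end.

Definition sadd (k : field_kind) : scal k -> scal k -> scal k :=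
  match k with RealCase => Rplus | ComplexCase => Cadd end.
Definition sopp (k : field_kind) : scal k -> scal k :=
  match k with RealCase => Ropp | ComplexCase => Copp end.
Definition smul (k : field_kind) : scal k -> scal k -> scal k :=
  match k with RealCase => Rmult | ComplexCase => Cmul end.
Definition sabs (k : field_kind) : scal k -> R :=
  match k with RealCase => Rabs | ComplexCase => Cabs end.
Definition sofR (k : field_kind) : R -> scal k :=
  match k with RealCase => fun r => r | ComplexCase => CofR end.

Definition is_topology {K : Type} (opens : (K -> Prop) -> Prop) : Prop :=
  opens (fun _ => True) /\
  (forall U V, opens U -> opens V -> opens (fun x => U x /\ V x)) /\
  (forall F : (K -> Prop) -> Prop, (forall U, F U -> opens U) ->
     opens (fun x => exists U, F U /\ U x)).

Definition is_compact {K : Type} (opens : (K -> Prop) -> Prop) : Prop :=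
  forall F : (K -> Prop) -> Prop,
    (forall U, F U -> opens U) ->
    (forall x, exists U, F U /\ U x) ->
    exists l : list (K -> Prop),
      (forall U, In U l -> F U) /\ (forall x, exists U, In U l /\ U x).

Definition is_hausdorff {K : Type} (opens : (K -> Prop) -> Prop) : Prop :=
  forall x y : K, x <> y ->
    exists U V, opens U /\ opens V /\ U x /\ V y /\ (forall z, ~ (U z /\ V z)).

Section CK.
Variable k : field_kind.
Variable K : Type.
Variable opens : (K -> Prop) -> Prop.

Definition fn := K -> scal k.

Definition continuous (f : fn) : Prop :=
  forall x eps, 0 < eps ->
    exists U, opens U /\ U x /\
      forall y, U y -> sabs k (sadd k (f y) (sopp k (f x))) < eps.

Definition inCK (f : fn) : Prop := continuous f.

Definition fzero : fn := fun _ => sofR k 0.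
Definition fadd (f g : fn) : fn := fun t => sadd k (f t) (g t).
Definition fsub (f g : fn) : fn := fun t => sadd k (f t) (sopp k (g t)).
Definition fscale (a : scal k) (f : fn) : fn := fun t => smul k a (f t).

Definition norm (f : fn) : R := real_of (RSup (fun r => exists t, r = sabs k (f t))).

Definition in_dual (phi : fn -> scal k) : Prop :=
  (forall f g, inCK f -> inCK g -> phi (fadd f g) = sadd k (phi f) (phi g)) /\
  (forall a f, inCK f -> phi (fscale a f) = smul k a (phi f)) /\
  (exists M, forall f, inCK f -> sabs k (phi f) <= M * norm f).

Definition dual_norm (phi : fn -> scal k) : R :=
  real_of (RSup (fun r => exists f, inCK f /\ norm f <= 1 /\ r = sabs k (phi f))).

Definition Dset (x : fn) (phi : fn -> scal k) : Prop :=
  in_dual phi /\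
  phi x = sofR k (dual_norm phi * norm x) /\
  dual_norm phi * norm x = norm x ^ 2.

Definition in_Lip0 (T : fn -> fn) : Prop :=
  (forall f, inCK f -> inCK (T f)) /\
  T fzero = fzero /\
  (exists L, forall x y, inCK x -> inCK y -> norm (fsub (T x) (T y)) <= L * norm (fsub x y)).

Definition lip_norm (T : fn -> fn) : Rbar :=
  RSup (fun r => exists x y, inCK x /\ inCK y /\ x <> y /\
          r = norm (fsub (T x) (T y)) / norm (fsub x y)).

Definition omega (T : fn -> fn) : Rbar :=
  RSup (fun r => exists x y phi, inCK x /\ inCK y /\ x <> y /\ Dset (fsub x y) phi /\
          r = sabs k (phi (fsub (T x) (T y))) / norm (fsub x y) ^ 2).

Definition nL : Rbar :=
  Inf (fun w => exists T, in_Lip0 T /\ lip_norm T = Fin 1 /\ w = omega T).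

End CK.

(* Main.v *)
Require Import Defs.
From Stdlib Require Import Reals.
From Stdlib Require Import Lra Psatz List ClassicalEpsilon Classical FunctionalExtensionality.
Open Scope R_scope.

Lemma Rbar_le_antisym a b : Rbar_le a b -> Rbar_le b a -> a = b.
Proof. destruct a, b; simpl; intros; try tauto. f_equal; lra. Qed.

Lemma sup_unique S l1 l2 : Rbar_is_sup S l1 -> Rbar_is_sup S l2 -> l1 = l2.
Proof. intros [A B] [C D]. apply Rbar_le_antisym; [apply B|apply D]; assumption. Qed.

Lemma inf_unique S l1 l2 : Rbar_is_inf S l1 -> Rbar_is_inf S l2 -> l1 = l2.
Proof. intros [A B] [C D]. apply Rbar_le_antisym; [apply D|apply B]; assumption. Qed.

Definition RS (S : R -> Prop) : Rbar -> Prop := fun x => exists r, x = Fin r /\ S r.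

Lemma ex_RSup (S : R -> Prop) : exists l, Rbar_is_sup (RS S) l.
Proof.
  destruct (classic (exists r, S r)) as [[r0 Hr0]|Hne].
  - destruct (classic (exists B, forall r, S r -> r <= B)) as [[B HB]|Hub].
    + assert (Hb : bound S) by (exists B; intros x Hx; apply HB; exact Hx).
      destruct (completeness S Hb (ex_intro _ r0 Hr0)) as [m [Hm1 Hm2]].
      exists (Fin m); split.
      * intros x [r [-> Hr]]. simpl. apply Hm1; exact Hr.
      * intros u Hu. destruct u; simpl; auto.
        -- apply Hm2. intros x Hx. specialize (Hu (Fin x) (ex_intro _ x (conj eq_refl Hx))). exact Hu.
        -- apply (Hu (Fin r0)); exists r0; auto.
    + exists PInf; split.
      * intros x _; destruct x; simpl; auto.
      * intros u Hu. destruct u; simpl; auto.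
        -- apply Hub. exists r. intros x Hx. apply (Hu (Fin x)). exists x; auto.
        -- apply (Hu (Fin r0)); exists r0; auto.
  - exists MInf; split.
    + intros x [r [_ Hr]]. exfalso; apply Hne; eauto.
    + intros u _; simpl; auto.
Qed.

Lemma RSup_spec S : Rbar_is_sup (RS S) (RSup S).
Proof.
  unfold RSup, Sup. apply epsilon_spec. apply ex_RSup.
Qed.

Lemma RSup_bounded (S : R -> Prop) r0 B : S r0 -> (forall r, S r -> r <= B) ->
  exists m, RSup S = Fin m /\ (forall r, S r -> r <= m) /\
    (forall u, (forall r, S r -> r <= u) -> m <= u).
Proof.
  intros H0 HB. destruct (RSup_spec S) as [U L].
  destruct (RSup S) as [m| |] eqn:E.
  - exists m; split; auto; split.
    + intros r Hr. apply (U (Fin r)). exists r; auto.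
    + intros u Hu. apply (L (Fin u)). intros x [r [-> Hr]]. apply Hu; auto.
  - exfalso. apply (L (Fin B)). intros x [r [-> Hr]]. simpl. apply HB; auto.
  - exfalso. apply (U (Fin r0)). exists r0; auto.
Qed.

Lemma RSup_max (S : R -> Prop) r0 : S r0 -> (forall r, S r -> r <= r0) -> RSup S = Fin r0.
Proof.
  intros H0 HB. destruct (RSup_bounded S r0 r0 H0 HB) as [m [E [U L]]].
  rewrite E. f_equal. apply Rle_antisym. apply L; auto. apply U; auto.
Qed.

Lemma RSup_ge1 (S : R -> Prop) : (forall th, th < 1 -> exists r, S r /\ th < r) ->
  Rbar_le (Fin 1) (RSup S).
Proof.
  intros H. destruct (RSup_spec S) as [U L].
  destruct (RSup S) as [m| |] eqn:E; simpl; auto.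
  - destruct (Rle_or_lt 1 m) as [h|h]; auto.
    destruct (H ((m+1)/2)) as [r [Hr Hlt]]; [lra|].
    assert (Rbar_le (Fin r) (Fin m)) by (apply U; exists r; auto). simpl in H0. lra.
  - destruct (H 0) as [r [Hr _]]; [lra|]. apply (U (Fin r)); exists r; auto.
Qed.

Lemma Ceq a b c d : a = c -> b = d -> mkC a b = mkC c d.
Proof. intros -> ->; reflexivity. Qed.

Lemma Cabs_nonneg z : 0 <= Cabs z.
Proof. apply sqrt_pos. Qed.

Lemma Cabs_mul z w : Cabs (Cmul z w) = Cabs z * Cabs w.
Proof.
  destruct z as [a b], w as [c d]; unfold Cabs, Cmul; simpl.
  rewrite <- sqrt_mult by nra. f_equal. ring.
Qed.

Lemma Cabs_triang z w : Cabs (Cadd z w) <= Cabs z + Cabs w.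
Proof.
  destruct z as [a b], w as [c d]; unfold Cabs, Cadd; cbn [Re Im].
  set (p := a^2 + b^2). set (q := c^2+d^2).
  assert (Hp : 0 <= p) by (unfold p; nra). assert (Hq : 0 <= q) by (unfold q; nra).
  assert (Hs : sqrt p * sqrt q = sqrt (p*q)) by (rewrite sqrt_mult; auto).
  assert (CS : a*c + b*d <= sqrt (p*q)).
  { destruct (Rle_or_lt (a*c+b*d) 0) as [h|h]. pose proof (sqrt_pos (p*q)); lra.
    rewrite <- (sqrt_pow2 (a*c+b*d)) by lra. apply sqrt_le_1_alt. unfold p, q. pose proof (pow2_ge_0 (a*d-b*c)). nra. }
  apply Rsqr_incr_0_var. 2: pose proof (sqrt_pos p); pose proof (sqrt_pos q); lra.
  unfold Rsqr. rewrite (sqrt_sqrt ((a+c)^2+(b+d)^2)) by (pose proof (pow2_ge_0 (a+c)); pose proof (pow2_ge_0 (b+d)); lra).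
  replace ((sqrt p + sqrt q) * (sqrt p + sqrt q)) with
     (sqrt p * sqrt p + sqrt q * sqrt q + 2 * (sqrt p * sqrt q)) by ring.
  rewrite !sqrt_sqrt by auto. rewrite Hs. unfold p, q in *. lra.
Qed.

Lemma Cabs_ofR r : Cabs (CofR r) = Rabs r.
Proof. unfold Cabs, CofR; simpl. rewrite <- sqrt_Rsqr_abs; f_equal; unfold Rsqr; ring. Qed.

Definition sconj (k : field_kind) : scal k -> scal k :=
  match k with RealCase => fun r => r | ComplexCase => fun z => mkC (Re z) (- Im z) end.

Ltac seq_tac := let k := fresh in
  match goal with |- forall k : field_kind, _ => intro k; destruct k; simpl; intros;
   [ try ring | repeat match goal with z : Cplx |- _ => destruct z end;
       unfold Cadd, Copp, Cmul, CofR; cbn [Re Im]; apply Ceq; ring ] end.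

Notation ssub k a b := (sadd k a (sopp k b)).

Lemma sabs_nonneg : forall k (a : scal k), 0 <= sabs k a.
Proof. destruct k; simpl; intros. apply Rabs_pos. apply Cabs_nonneg. Qed.

Lemma sabs_triang : forall k (a b : scal k), sabs k (sadd k a b) <= sabs k a + sabs k b.
Proof. destruct k; simpl; intros. apply Rabs_triang. apply Cabs_triang. Qed.

Lemma sabs_mul : forall k (a b : scal k), sabs k (smul k a b) = sabs k a * sabs k b.
Proof. destruct k; simpl; intros. apply Rabs_mult. apply Cabs_mul. Qed.

Lemma sabs_ofR : forall k r, sabs k (sofR k r) = Rabs r.
Proof. destruct k; simpl; intros. reflexivity. apply Cabs_ofR. Qed.

Lemma sabs_opp : forall k (a : scal k), sabs k (sopp k a) = sabs k a.
Proof. destruct k; simpl; intros. apply Rabs_Ropp. destruct a as [x y]; unfold Cabs, Copp; cbn [Re Im]. f_equal; ring. Qed.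

Lemma sabs_eq0 : forall k (a : scal k), sabs k a = 0 -> a = sofR k 0.
Proof.
  destruct k; simpl; intros.
  - destruct (Req_dec a 0); auto. exfalso. pose proof (Rabs_pos_lt a H0). lra.
  - destruct a as [x y]; unfold Cabs, CofR in *; cbn [Re Im] in *.
    apply sqrt_eq_0 in H. 2: nra.
    assert (x = 0) by nra. assert (y = 0) by nra. subst; reflexivity.
Qed.

Lemma ofR_1_neq_0 : forall k, sofR k 1 <> sofR k 0.
Proof. destruct k; simpl; intros H. lra. unfold CofR in H. injection H. lra. Qed.

Lemma sub_self : forall k (a : scal k), ssub k a a = sofR k 0.
Proof. seq_tac. Qed.

Lemma id_tri : forall k (a b c : scal k), sadd k (ssub k a b) (ssub k b c) = ssub k a c.
Proof. seq_tac. Qed.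
Lemma id_opp_sub : forall k (a b : scal k), sopp k (ssub k a b) = ssub k b a.
Proof. seq_tac. Qed.
Lemma id_subsub : forall k (a b c d : scal k),
  ssub k (ssub k a b) (ssub k c d) = sadd k (ssub k a c) (sopp k (ssub k b d)).
Proof. seq_tac. Qed.
Lemma id_addadd : forall k (a b c d : scal k),
  ssub k (sadd k a b) (sadd k c d) = sadd k (ssub k a c) (ssub k b d).
Proof. seq_tac. Qed.
Lemma smul_add_r : forall k (al u v : scal k), smul k al (sadd k u v) = sadd k (smul k al u) (smul k al v).
Proof. seq_tac. Qed.
Lemma smul_swap : forall k (al a u : scal k), smul k al (smul k a u) = smul k a (smul k al u).
Proof. seq_tac. Qed.
Lemma smul_one : forall k (al : scal k), smul k al (sofR k 1) = al.
Proof. seq_tac. Qed.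
Lemma id_scale : forall k r r' (w w' : scal k),
  ssub k (smul k (sofR k r) w) (smul k (sofR k r') w') =
  sadd k (smul k (sofR k r) (ssub k w w')) (smul k (sofR k (r - r')) w').
Proof. seq_tac. Qed.
Lemma id_q1 : forall k s (y z : scal k), ssub k (sadd k y (smul k (sofR k s) z)) y = smul k (sofR k s) z.
Proof. seq_tac. Qed.
Lemma id_q2 : forall k s (x y : scal k),
  ssub k x (sadd k y (smul k (sofR k s) (ssub k x y))) = smul k (sofR k (1 - s)) (ssub k x y).
Proof. seq_tac. Qed.
Lemma id_p1 : forall k (x e y : scal k), ssub k (sadd k x e) y = sadd k (ssub k x y) e.
Proof. seq_tac. Qed.
Lemma id_p2 : forall k (x e : scal k), ssub k (sadd k x e) x = e.
Proof. seq_tac. Qed.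
Lemma id_p3 : forall k (e : scal k), sadd k (sofR k 0) e = e.
Proof. seq_tac. Qed.

Lemma conj_mul : forall k (a : scal k), smul k (sconj k a) a = sofR k (sabs k a * sabs k a).
Proof.
  destruct k; simpl; intros.
  - rewrite <- Rabs_mult. rewrite Rabs_right. reflexivity. nra.
  - destruct a as [x y]; unfold Cmul, CofR, Cabs; cbn [Re Im].
    rewrite sqrt_sqrt by nra. apply Ceq; ring.
Qed.
Lemma sabs_conj : forall k (a : scal k), sabs k (sconj k a) = sabs k a.
Proof. destruct k; simpl; intros. auto. destruct a as [x y]; unfold Cabs; cbn [Re Im]. f_equal; ring. Qed.

Lemma sabs_sub_tri k (a b c : scal k) : sabs k (ssub k a c) <= sabs k (ssub k a b) + sabs k (ssub k b c).
Proof. rewrite <- (id_tri k a b c). apply sabs_triang. Qed.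
Lemma sabs_sub_sym k (a b : scal k) : sabs k (ssub k a b) = sabs k (ssub k b a).
Proof. rewrite <- (id_opp_sub k a b), sabs_opp. reflexivity. Qed.
Lemma sabs_subsub k (a b c d : scal k) :
  sabs k (ssub k (ssub k a b) (ssub k c d)) <= sabs k (ssub k a c) + sabs k (ssub k b d).
Proof. rewrite id_subsub. eapply Rle_trans. apply sabs_triang. rewrite sabs_opp. lra. Qed.
Lemma sabs_addadd k (a b c d : scal k) :
  sabs k (ssub k (sadd k a b) (sadd k c d)) <= sabs k (ssub k a c) + sabs k (ssub k b d).
Proof. rewrite id_addadd. apply sabs_triang. Qed.
Lemma id_ab : forall k (a b : scal k), sadd k (ssub k a b) b = a.
Proof. seq_tac. Qed.
Lemma sabs_abs_sub k (a b : scal k) : Rabs (sabs k a - sabs k b) <= sabs k (ssub k a b).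
Proof.
  assert (H1 : sabs k a <= sabs k (ssub k a b) + sabs k b).
  { rewrite <- (id_ab k a b) at 1. apply sabs_triang. }
  assert (H2 : sabs k b <= sabs k (ssub k b a) + sabs k a).
  { rewrite <- (id_ab k b a) at 1. apply sabs_triang. }
  rewrite sabs_sub_sym in H2. apply Rabs_le. lra.
Qed.

Lemma cont_bounded k K opens (f : fn k K) : is_compact opens -> continuous k K opens f ->
  exists B, forall t, sabs k (f t) <= B.
Proof.
  intros Hc Hf.
  set (F := fun U : K -> Prop => opens U /\ exists x, forall y, U y -> sabs k (ssub k (f y) (f x)) < 1).
  destruct (Hc F) as [l [Hl Hcov]].
  - intros U [HU _]; exact HU.
  - intros x. destruct (Hf x 1 Rlt_0_1) as [U [HU [Ux HUb]]]. exists U; split; auto. split; eauto.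
  - assert (G : forall l : list (K -> Prop), (forall U, In U l -> F U) ->
       exists B, forall y, (exists U, In U l /\ U y) -> sabs k (f y) <= B).
    { induction l0 as [|U l0 IH]; intros Hin.
      - exists 0. intros y [U [[] _]].
      - destruct IH as [B HB]. intros V HV; apply Hin; right; auto.
        destruct (Hin U (or_introl eq_refl)) as [_ [x Hx]].
        exists (Rmax B (sabs k (f x) + 1)). intros y [V [[<-|HV] Vy]].
        + specialize (Hx y Vy). pose proof (sabs_abs_sub k (f y) (f x)).
          pose proof (Rle_abs (sabs k (f y) - sabs k (f x))). apply Rle_trans with (sabs k (f x) + 1). lra. apply Rmax_r.
        + apply Rle_trans with B. apply HB; eauto. apply Rmax_l. }
    destruct (G l Hl) as [B HB]. exists B. intros t. apply HB. apply Hcov.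
Qed.

Definition bnd k K (f : fn k K) := exists B, forall t, sabs k (f t) <= B.

Lemma norm_spec k K (f : fn k K) : inhabited K -> bnd k K f ->
  (forall t, sabs k (f t) <= norm k K f) /\
  (forall B, (forall t, sabs k (f t) <= B) -> norm k K f <= B).
Proof.
  intros [t0] [B HB]. unfold norm.
  destruct (RSup_bounded (fun r => exists t, r = sabs k (f t)) (sabs k (f t0)) B) as [m [E [U L]]].
  - eauto.
  - intros r [t ->]; auto.
  - rewrite E; simpl. split.
    + intros t; apply U; eauto.
    + intros B' HB'. apply L. intros r [t ->]; auto.
Qed.

Lemma norm_attained k K (f : fn k K) t0 r : (forall t, sabs k (f t) <= r) -> sabs k (f t0) = r ->
  norm k K f = r.
Proof.
  intros H1 H2. unfold norm. rewrite (RSup_max _ r). reflexivity.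
  - exists t0; auto.
  - intros x [t ->]; auto.
Qed.

Lemma norm_nonneg k K (f : fn k K) : inhabited K -> bnd k K f -> 0 <= norm k K f.
Proof. intros [t] Hb. destruct (norm_spec k K f (inhabits t) Hb) as [A _].
  pose proof (sabs_nonneg k (f t)). specialize (A t). lra. Qed.

Lemma norm_approx k K (f : fn k K) e : inhabited K -> bnd k K f -> 0 < e ->
  exists t, norm k K f - e < sabs k (f t).
Proof.
  intros Hi Hb He. destruct (norm_spec k K f Hi Hb) as [_ L].
  apply NNPP; intro Hn. assert (norm k K f <= norm k K f - e). apply L.
  intros t. apply Rnot_lt_le. intro; apply Hn; eauto. lra.
Qed.

Lemma cont_sub k K opens (f g : fn k K) : is_topology opens ->
  continuous k K opens f -> continuous k K opens g -> continuous k K opens (fsub k K f g).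
Proof.
  intros [_ [Hint _]] Hf Hg x e He.
  destruct (Hf x (e/2)) as [U [HU [Ux HUb]]]. lra.
  destruct (Hg x (e/2)) as [V [HV [Vx HVb]]]. lra.
  exists (fun z => U z /\ V z). split; auto. split; auto.
  intros y [Uy Vy]. unfold fsub. eapply Rle_lt_trans. apply sabs_subsub.
  specialize (HUb y Uy); specialize (HVb y Vy). lra.
Qed.

Lemma cont_add k K opens (f g : fn k K) : is_topology opens ->
  continuous k K opens f -> continuous k K opens g -> continuous k K opens (fadd k K f g).
Proof.
  intros [_ [Hint _]] Hf Hg x e He.
  destruct (Hf x (e/2)) as [U [HU [Ux HUb]]]. lra.
  destruct (Hg x (e/2)) as [V [HV [Vx HVb]]]. lra.
  exists (fun z => U z /\ V z). split; auto. split; auto.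
  intros y [Uy Vy]. unfold fadd. eapply Rle_lt_trans. apply sabs_addadd.
  specialize (HUb y Uy); specialize (HVb y Vy). lra.
Qed.

Lemma cont_const k K opens (a : scal k) : is_topology opens -> continuous k K opens (fun _ => a).
Proof.
  intros [Htop _] x e He. exists (fun _ => True). split; auto. split; auto.
  intros y _. rewrite sub_self, sabs_ofR, Rabs_R0. auto.
Qed.

Lemma cont_comp k K opens (F : scal k -> scal k) (L : R) (f : fn k K) : 0 <= L ->
  (forall w w', sabs k (ssub k (F w) (F w')) <= L * sabs k (ssub k w w')) ->
  continuous k K opens f -> continuous k K opens (fun t => F (f t)).
Proof.
  intros HL HF Hf x e He.
  destruct (Hf x (e / (L+1))) as [U [HU [Ux HUb]]]. apply Rdiv_lt_0_compat; lra.
  exists U; split; auto; split; auto. intros y Uy.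
  eapply Rle_lt_trans. apply HF. specialize (HUb y Uy).
  pose proof (sabs_nonneg k (ssub k (f y) (f x))).
  apply Rle_lt_trans with ((L+1) * sabs k (ssub k (f y) (f x))). nra.
  apply Rmult_lt_compat_l with (r := L+1) in HUb. 2: lra.
  replace ((L + 1) * (e / (L + 1))) with e in HUb by (field; lra). lra.
Qed.

Lemma Rdiv_le_0_compat a b : 0 <= a -> 0 < b -> 0 <= a / b.
Proof. intros; unfold Rdiv; apply Rmult_le_pos; auto; left; apply Rinv_0_lt_compat; auto. Qed.

Lemma R2a g M A : 0 < g -> g <= M -> 0 <= A -> A <= M ->
  Rabs (((M+g)/2) / Rmax A g) * A <= (M+g)/2.
Proof.
  intros. unfold Rmax; destruct (Rle_dec A g).
  - rewrite Rabs_right. 2: apply Rle_ge, Rdiv_le_0_compat; lra.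
    apply Rle_trans with (((M+g)/2)/g * g). apply Rmult_le_compat_l. apply Rdiv_le_0_compat; lra. lra.
    right; field; lra.
  - rewrite Rabs_right. 2: apply Rle_ge, Rdiv_le_0_compat; lra.
    right; field; lra.
Qed.

Lemma R2b g M A : 0 < g -> g <= M -> 0 <= A -> A <= M ->
  Rabs (1 - ((M+g)/2) / Rmax A g) * A <= (M-g)/2.
Proof.
  intros. unfold Rmax; destruct (Rle_dec A g).
  - replace (1 - (M + g) / 2 / g) with (- ((M - g)/(2*g))) by (field; lra).
    rewrite Rabs_Ropp, Rabs_right. 2: apply Rle_ge, Rdiv_le_0_compat; lra.
    apply Rle_trans with ((M - g) / (2 * g) * g). apply Rmult_le_compat_l. apply Rdiv_le_0_compat; lra. lra.
    right; field; lra.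
  - replace (1 - (M + g) / 2 / A) with ((A - (M+g)/2)/A) by (field; lra).
    unfold Rdiv at 1. rewrite Rabs_mult, Rabs_inv, (Rabs_right A) by lra.
    replace (Rabs (A - (M + g) / 2) * / A * A) with (Rabs (A - (M + g) / 2)) by (field; lra).
    apply Rabs_le; lra.
Qed.

Lemma R2c g M : 0 < g -> g <= M -> Rabs (((M+g)/2) / Rmax g g) * g = (M+g)/2.
Proof. intros. rewrite Rmax_left by lra. rewrite Rabs_right. field; lra. apply Rle_ge, Rdiv_le_0_compat; lra. Qed.

Lemma R2d g M : 0 < g -> g <= M -> Rabs (1 - ((M+g)/2) / Rmax g g) * g = (M-g)/2.
Proof. intros. rewrite Rmax_left by lra.
  replace (1 - (M + g) / 2 / g) with (- ((M - g)/(2*g))) by (field; lra).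
  rewrite Rabs_Ropp, Rabs_right. field; lra. apply Rle_ge, Rdiv_le_0_compat; lra. Qed.

Lemma Rmax_lip A A' g : Rabs (Rmax A g - Rmax A' g) <= Rabs (A - A').
Proof. unfold Rmax; destruct (Rle_dec A g), (Rle_dec A' g); apply Rabs_le;
  pose proof (Rle_abs (A - A')); pose proof (Rle_abs (-(A - A'))); rewrite Rabs_Ropp in *; lra. Qed.

Lemma Rlem1 b g A A' D : 0 <= b -> 0 < g -> 0 <= A -> 0 <= A' -> Rabs (A - A') <= D ->
  Rabs (b / Rmax A g) * D + Rabs (b / Rmax A g - b / Rmax A' g) * A' <= 2 * b / g * D.
Proof.
  intros Hb Hg HA HA' HD.
  set (m := Rmax A g). set (m' := Rmax A' g).
  assert (Hm : g <= m) by apply Rmax_r. assert (Hm' : g <= m') by apply Rmax_r.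
  assert (HAm : A' <= m') by apply Rmax_l.
  assert (Hmm : Rabs (m - m') <= D) by (eapply Rle_trans; [apply Rmax_lip|exact HD]).
  assert (HD0 : 0 <= D) by (eapply Rle_trans; [apply Rabs_pos|exact HD]).
  rewrite (Rabs_right (b/m)) by (apply Rle_ge, Rdiv_le_0_compat; lra).
  replace (b / m - b / m') with (b * (m' - m) / (m * m')) by (field; lra).
  assert (EA : Rabs (b * (m' - m) / (m * m')) = b * Rabs (m' - m) * / (m * m')).
  { unfold Rdiv. rewrite Rabs_mult, Rabs_mult, Rabs_inv, (Rabs_right b), (Rabs_right (m*m')); nra. }
  rewrite EA.
  rewrite <- Rabs_Ropp in Hmm. replace (- (m - m')) with (m' - m) in Hmm by ring.
  assert (E1 : b / m * D <= b / g * D).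
  { apply Rmult_le_compat_r; auto. unfold Rdiv. apply Rmult_le_compat_l; auto.
    apply Rinv_le_contravar; lra. }
  assert (E2 : b * Rabs (m' - m) * / (m * m') * A' <= b / g * D).
  { apply Rle_trans with (b * D * / (m * m') * m').
    - apply Rle_trans with (b * D * / (m * m') * A').
      + apply Rmult_le_compat_r; auto. apply Rmult_le_compat_r.
        left; apply Rinv_0_lt_compat; nra. apply Rmult_le_compat_l; auto.
      + apply Rmult_le_compat_l; auto. apply Rmult_le_pos. nra. left; apply Rinv_0_lt_compat; nra.
    - replace (b * D * / (m * m') * m') with (b / m * D) by (field; lra). exact E1. }
  replace (2 * b / g * D) with (b / g * D + b / g * D) by (field; lra). lra.
Qed.

Lemma ssub_eq0 k (a b : scal k) : ssub k a b = sofR k 0 -> a = b.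
Proof. intros H. rewrite <- (id_ab k a b), H, id_p3. reflexivity. Qed.

Lemma neq_norm_pos k K opens (x y : fn k K) : is_topology opens -> is_compact opens -> inhabited K ->
  inCK k K opens x -> inCK k K opens y -> x <> y -> 0 < norm k K (fsub k K x y).
Proof.
  intros Ht Hc Hi Hx Hy Hne.
  assert (Hb : bnd k K (fsub k K x y)) by (apply cont_bounded with opens; auto; apply cont_sub; auto).
  destruct (norm_spec k K _ Hi Hb) as [U _].
  destruct (classic (exists t, x t <> y t)) as [[t Ht0]|Hn].
  - specialize (U t). change (fsub k K x y t) with (ssub k (x t) (y t)) in U.
    destruct (Req_dec (sabs k (ssub k (x t) (y t))) 0) as [E|E].
    + apply sabs_eq0, ssub_eq0 in E. contradiction.
    + pose proof (sabs_nonneg k (ssub k (x t) (y t))). lra.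
  - exfalso. apply Hne. apply functional_extensionality. intros t. apply NNPP. intro; apply Hn; eauto.
Qed.

Lemma norm_self k K (x : fn k K) : inhabited K -> norm k K (fsub k K x x) = 0.
Proof.
  intros [t0]. apply (norm_attained k K _ t0); unfold fsub; intros; rewrite ?sub_self, sabs_ofR, Rabs_R0; lra.
Qed.

Lemma lip_le k K opens T : is_topology opens -> is_compact opens -> inhabited K ->
  in_Lip0 k K opens T -> lip_norm k K opens T = Fin 1 ->
  forall x y, inCK k K opens x -> inCK k K opens y ->
  norm k K (fsub k K (T x) (T y)) <= norm k K (fsub k K x y).
Proof.
  intros Ht Hc Hi [HT _] HL x y Hx Hy.
  destruct (classic (x = y)) as [<-|Hne].
  - rewrite !norm_self by auto. lra.
  - pose proof (neq_norm_pos k K opens x y Ht Hc Hi Hx Hy Hne) as Hp.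
    destruct (RSup_spec (fun r => exists x y, inCK k K opens x /\ inCK k K opens y /\ x <> y /\
          r = norm k K (fsub k K (T x) (T y)) / norm k K (fsub k K x y))) as [U _].
    unfold lip_norm in HL. unfold RSup in HL. unfold RSup in U. rewrite HL in U.
    specialize (U (Fin (norm k K (fsub k K (T x) (T y)) / norm k K (fsub k K x y)))).
    simpl in U. assert (H := U (ex_intro _ _ (conj eq_refl (ex_intro _ x (ex_intro _ y (conj Hx (conj Hy (conj Hne eq_refl)))))))).
    apply Rmult_le_compat_r with (r := norm k K (fsub k K x y)) in H; [|lra].
    replace (norm k K (fsub k K (T x) (T y)) / norm k K (fsub k K x y) * norm k K (fsub k K x y))
      with (norm k K (fsub k K (T x) (T y))) in H by (field; lra). lra.
Qed.

Lemma lip_approx k K opens T : lip_norm k K opens T = Fin 1 -> forall th, th < 1 ->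
  exists x y, inCK k K opens x /\ inCK k K opens y /\ x <> y /\
    th < norm k K (fsub k K (T x) (T y)) / norm k K (fsub k K x y).
Proof.
  intros HL th Hth. apply NNPP; intro Hn.
  destruct (RSup_spec (fun r => exists x y, inCK k K opens x /\ inCK k K opens y /\ x <> y /\
          r = norm k K (fsub k K (T x) (T y)) / norm k K (fsub k K x y))) as [_ L].
  unfold lip_norm, RSup in HL. unfold RSup in L. rewrite HL in L.
  specialize (L (Fin th)). simpl in L. assert (1 <= th); [|lra]. apply L.
  intros v [r [-> [x [y [Hx [Hy [Hne ->]]]]]]]. simpl. apply Rnot_lt_le. intro; apply Hn.
  exists x, y; auto.
Qed.

Lemma cont_bnd k K opens (f : fn k K) : is_compact opens -> inCK k K opens f -> bnd k K f.
Proof. intros; apply cont_bounded with opens; auto. Qed.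

Lemma le_norm k K opens (f : fn k K) t : is_compact opens -> inhabited K -> inCK k K opens f ->
  sabs k (f t) <= norm k K f.
Proof. intros Hc Hi Hf. apply (norm_spec k K f Hi (cont_bnd k K opens f Hc Hf)). Qed.

Lemma key2 k K opens T (Ht : is_topology opens) (Hc : is_compact opens) (Hi : inhabited K)
  (HTc : forall f, inCK k K opens f -> inCK k K opens (T f))
  (x y : fn k K) t0 th : inCK k K opens x -> inCK k K opens y -> 0 <= th ->
  0 < sabs k (ssub k (x t0) (y t0)) ->
  th * norm k K (fsub k K x y) < sabs k (ssub k (T x t0) (T y t0)) ->
  exists u v t1, inCK k K opens u /\ inCK k K opens v /\
    sabs k (fsub k K u v t1) = norm k K (fsub k K u v) /\
    th * norm k K (fsub k K u v) < sabs k (fsub k K (T u) (T v) t1).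
Proof.
  intros Hx Hy Hth Hg0 Hw.
  set (z := fsub k K x y).
  assert (Hz : inCK k K opens z) by (apply cont_sub; auto).
  set (M := norm k K z). set (g := sabs k (z t0)).
  assert (HzM : forall t, sabs k (z t) <= M) by (intro t; apply le_norm with opens; auto).
  assert (HgM : g <= M) by apply HzM.
  assert (Hg : 0 < g) by exact Hg0.
  set (b := (M+g)/2).
  set (F := fun w : scal k => smul k (sofR k (b / Rmax (sabs k w) g)) w).
  set (d1 := fun t => F (z t)).
  set (q := fadd k K y d1).
  assert (Hd1 : inCK k K opens d1).
  { apply (cont_comp k K opens F (2*b/g)).
    - unfold b. apply Rdiv_le_0_compat; lra.
    - intros w w'. unfold F. rewrite id_scale. eapply Rle_trans. apply sabs_triang.
      rewrite !sabs_mul, !sabs_ofR. apply Rlem1; try apply sabs_nonneg. unfold b; lra. exact Hg.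
      apply sabs_abs_sub.
    - exact Hz. }
  assert (Hq : inCK k K opens q) by (apply cont_add; auto).
  assert (Eq1 : fsub k K q y = d1).
  { apply functional_extensionality; intro t. unfold fsub, q, fadd, d1, F. apply id_q1. }
  assert (Eq2 : forall t, fsub k K x q t = smul k (sofR k (1 - b / Rmax (sabs k (z t)) g)) (z t)).
  { intro t. unfold fsub at 1. unfold q, fadd, d1, F, z, fsub. apply id_q2. }
  assert (Hd1t0 : sabs k (d1 t0) = b).
  { unfold d1, F. rewrite sabs_mul, sabs_ofR. apply R2c; auto. }
  assert (Nb : norm k K (fsub k K q y) = b).
  { rewrite Eq1. apply (norm_attained k K d1 t0); auto. intro t. unfold d1, F.
    rewrite sabs_mul, sabs_ofR. apply R2a; auto. apply sabs_nonneg. }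
  assert (Hxq0 : sabs k (fsub k K x q t0) = (M-g)/2).
  { rewrite Eq2, sabs_mul, sabs_ofR. apply R2d; auto. }
  assert (Na : norm k K (fsub k K x q) = (M-g)/2).
  { apply (norm_attained k K _ t0); auto. intro t. rewrite Eq2, sabs_mul, sabs_ofR.
    apply R2b; auto. apply sabs_nonneg. }
  pose proof (sabs_sub_tri k (T x t0) (T q t0) (T y t0)) as Htri.
  destruct (Rlt_or_le (th*b) (sabs k (ssub k (T q t0) (T y t0)))) as [HB|HB].
  - exists q, y, t0. split; auto. split; auto. split.
    + rewrite Nb, Eq1. exact Hd1t0.
    + rewrite Nb. exact HB.
  - exists x, q, t0. split; auto. split; auto. split.
    + rewrite Na. exact Hxq0.
    + rewrite Na. change (th * ((M - g) / 2) < sabs k (ssub k (T x t0) (T q t0))).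
      fold z in Hw. fold M in Hw. unfold b in HB. nra.
Qed.

Lemma key k K opens T (Ht : is_topology opens) (Hc : is_compact opens) (Hi : inhabited K)
  (HT : in_Lip0 k K opens T) (HL : lip_norm k K opens T = Fin 1) th :
  0 <= th -> th < 1 ->
  exists u v t1, inCK k K opens u /\ inCK k K opens v /\
    sabs k (fsub k K u v t1) = norm k K (fsub k K u v) /\
    th * norm k K (fsub k K u v) < sabs k (fsub k K (T u) (T v) t1).
Proof.
  intros H0 H1. set (e := 1 - th).
  assert (HTc : forall f, inCK k K opens f -> inCK k K opens (T f)) by apply HT.
  pose proof (lip_le k K opens T Ht Hc Hi HT HL) as Lip.
  destruct (lip_approx k K opens T HL (1 - e/2)) as [x [y [Hx [Hy [Hne Hr]]]]]. unfold e; lra.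
  pose proof (neq_norm_pos k K opens x y Ht Hc Hi Hx Hy Hne) as HN.
  set (N := norm k K (fsub k K x y)) in *.
  assert (HTN : (1 - e/2) * N < norm k K (fsub k K (T x) (T y))).
  { apply Rmult_lt_compat_r with (r := N) in Hr; [|exact HN].
    replace (norm k K (fsub k K (T x) (T y)) / N * N) with (norm k K (fsub k K (T x) (T y))) in Hr by (field; lra).
    exact Hr. }
  assert (HTxy : inCK k K opens (fsub k K (T x) (T y))) by (apply cont_sub; [exact Ht|apply HTc; exact Hx|apply HTc; exact Hy]).
  destruct (norm_approx k K (fsub k K (T x) (T y)) (norm k K (fsub k K (T x) (T y)) - (1 - e/2) * N) Hi
     (cont_bnd k K opens _ Hc HTxy)) as [t0 Ht0]. lra.
  change (fsub k K (T x) (T y) t0) with (ssub k (T x t0) (T y t0)) in Ht0.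
  assert (Hw : (1 - e/2) * N < sabs k (ssub k (T x t0) (T y t0))) by lra.
  destruct (Req_dec (sabs k (ssub k (x t0) (y t0))) 0) as [E|E].
  - set (eta := e * N / 4).
    assert (Heta : 0 < eta) by (unfold eta, e; apply Rmult_lt_0_compat; [|lra]; apply Rmult_lt_0_compat; lra).
    set (x' := fun t => sadd k (x t) (sofR k eta)).
    assert (Hx' : inCK k K opens x') by (apply (cont_add k K opens x (fun _ => sofR k eta)); auto; apply cont_const; auto).
    apply sabs_eq0 in E.
    assert (Hz0 : sabs k (ssub k (x' t0) (y t0)) = eta).
    { unfold x'. rewrite id_p1, E, id_p3, sabs_ofR, Rabs_right; lra. }
    assert (Hn' : norm k K (fsub k K x' y) <= N + eta).
    { apply (norm_spec k K _ Hi (cont_bnd k K opens _ Hc (cont_sub k K opens x' y Ht Hx' Hy))).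
      intro t. change (sabs k (ssub k (x' t) (y t)) <= N + eta). unfold x'. rewrite id_p1.
      eapply Rle_trans. apply sabs_triang. rewrite sabs_ofR, (Rabs_right eta) by lra.
      pose proof (le_norm k K opens (fsub k K x y) t Hc Hi (cont_sub k K opens x y Ht Hx Hy)). unfold N. 
      change (fsub k K x y t) with (ssub k (x t) (y t)) in H. lra. }
    assert (Hxx : norm k K (fsub k K x' x) = eta).
    { apply (norm_attained k K _ t0); unfold fsub, x'; intros; rewrite ?id_p2, sabs_ofR, Rabs_right; lra. }
    assert (HT0 : sabs k (ssub k (T x' t0) (T x t0)) <= eta).
    { rewrite <- Hxx. eapply Rle_trans. 2: apply Lip; auto.
      apply (le_norm k K opens (fsub k K (T x') (T x)) t0 Hc Hi). apply cont_sub; [exact Ht|apply HTc; exact Hx'|apply HTc; exact Hx]. }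
    pose proof (sabs_sub_tri k (T x t0) (T x' t0) (T y t0)) as Htri.
    rewrite (sabs_sub_sym k (T x t0) (T x' t0)) in Htri.
    apply (key2 k K opens T Ht Hc Hi HTc x' y t0 th Hx' Hy H0). lra.
    assert (Hn0 : 0 <= norm k K (fsub k K x' y)) by (apply norm_nonneg; auto; apply (cont_bnd k K opens); auto; apply cont_sub; auto).
    apply Rle_lt_trans with (th * (N + eta)). apply Rmult_le_compat_l; auto.
    assert (th * (N + eta) <= (1 - e/2) * N - eta).
    { unfold eta, e. replace th with (1 - (1 - th)) at 1 by ring. set (ee := 1 - th).
      assert (0 < ee) by (unfold ee; lra). nra. }
    lra.
  - apply (key2 k K opens T Ht Hc Hi HTc x y t0 th Hx Hy H0).
    pose proof (sabs_nonneg k (ssub k (x t0) (y t0))). lra.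
    apply Rle_lt_trans with ((1 - e/2) * N); auto. apply Rmult_le_compat_r; unfold e; lra.
Qed.

Lemma omega_ge1 k K opens T (Ht : is_topology opens) (Hc : is_compact opens) (Hi : inhabited K)
  (HT : in_Lip0 k K opens T) (HL : lip_norm k K opens T = Fin 1) :
  Rbar_le (Fin 1) (omega k K opens T).
Proof.
  unfold omega. apply RSup_ge1. intros th Hth.
  destruct (key k K opens T Ht Hc Hi HT HL (Rmax 0 th)) as [u [v [t1 [Hu [Hv [Ha Hb]]]]]].
  apply Rmax_l. apply Rmax_lub_lt; lra.
  assert (HTc : forall f, inCK k K opens f -> inCK k K opens (T f)) by apply HT.
  assert (Hne : u <> v).
  { intros <-. change (fsub k K (T u) (T u) t1) with (ssub k (T u t1) (T u t1)) in Hb.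
    rewrite sub_self, sabs_ofR, Rabs_R0 in Hb.
    assert (0 <= norm k K (fsub k K u u)) by (apply norm_nonneg; auto; apply (cont_bnd k K opens); auto; apply cont_sub; auto).
    pose proof (Rmax_l 0 th). nra. }
  pose proof (neq_norm_pos k K opens u v Ht Hc Hi Hu Hv Hne) as HN.
  set (g := fsub k K u v) in *. set (N := norm k K g) in *.
  set (al := sconj k (g t1)).
  set (phi := fun f : fn k K => smul k al (f t1)).
  assert (Hal : sabs k al = N) by (unfold al; rewrite sabs_conj; exact Ha).
  assert (Hphi : forall f, sabs k (phi f) = N * sabs k (f t1)) by (intro f; unfold phi; rewrite sabs_mul, Hal; auto).
  assert (Hdn : dual_norm k K opens phi = N).
  { unfold dual_norm. rewrite (RSup_max _ N). reflexivity.
    - exists (fun _ => sofR k 1). split. apply cont_const; auto. split.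
      + rewrite (norm_attained k K (fun _ => sofR k 1) t1 1); try (intros; rewrite sabs_ofR, Rabs_R1); lra.
      + unfold phi. rewrite smul_one. auto.
    - intros r [f [Hf [Hf1 ->]]]. rewrite Hphi. pose proof (le_norm k K opens f t1 Hc Hi Hf).
      pose proof (sabs_nonneg k (f t1)). nra. }
  exists (sabs k (phi (fsub k K (T u) (T v))) / N ^ 2). split.
  - exists u, v, phi. split; auto. split; auto. split; auto. split; auto.
    unfold Dset. split; [|split].
    + split; [|split].
      * intros f h _ _. unfold phi, fadd. apply smul_add_r.
      * intros a f _. unfold phi, fscale. apply smul_swap.
      * exists N. intros f Hf. rewrite Hphi. apply Rmult_le_compat_l. lra. apply le_norm with opens; auto.
    + rewrite Hdn. unfold phi, al. rewrite conj_mul. change (sofR k (sabs k (g t1) * sabs k (g t1)) = sofR k (N * N)). rewrite Ha. reflexivity.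
    + rewrite Hdn. change (N * N = N ^ 2). ring.
  - rewrite Hphi. replace (N * sabs k (fsub k K (T u) (T v) t1) / N ^ 2) with (sabs k (fsub k K (T u) (T v) t1) / N) by (field; lra).
    apply Rmult_lt_compat_r with (r := / N) in Hb. 2: apply Rinv_0_lt_compat; lra.
    replace (Rmax 0 th * N * / N) with (Rmax 0 th) in Hb by (field; lra).
    pose proof (Rmax_r 0 th). unfold Rdiv. lra.
Qed.

Lemma id_Lip0 k K opens : in_Lip0 k K opens (fun f => f).
Proof. split; auto. split; auto. exists 1. intros. lra. Qed.

Lemma id_lip k K opens (Ht : is_topology opens) (Hc : is_compact opens) (Hi : inhabited K) :
  lip_norm k K opens (fun f => f) = Fin 1.
Proof.
  unfold lip_norm. apply RSup_max.
  - assert (H1 : inCK k K opens (fun _ => sofR k 1)) by (apply cont_const; auto).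
    assert (H0 : inCK k K opens (fun _ => sofR k 0)) by (apply cont_const; auto).
    assert (Hne : (fun _ : K => sofR k 1) <> (fun _ => sofR k 0)).
    { destruct Hi as [t]. intro E. apply (ofR_1_neq_0 k). exact (equal_f E t). }
    exists (fun _ => sofR k 1), (fun _ => sofR k 0). split; auto. split; auto. split; auto.
    pose proof (neq_norm_pos k K opens _ _ Ht Hc Hi H1 H0 Hne). field. lra.
  - intros r [x [y [Hx [Hy [Hne ->]]]]].
    pose proof (neq_norm_pos k K opens _ _ Ht Hc Hi Hx Hy Hne). right. field. lra.
Qed.

Lemma omega_id_le k K opens (Ht : is_topology opens) (Hc : is_compact opens) (Hi : inhabited K) :
  Rbar_le (omega k K opens (fun f => f)) (Fin 1).
Proof.
  destruct (RSup_spec (fun r => exists x y phi, inCK k K opens x /\ inCK k K opens y /\ x <> y /\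
     Dset k K opens (fsub k K x y) phi /\
     r = sabs k (phi (fsub k K x y)) / norm k K (fsub k K x y) ^ 2)) as [_ L].
  apply L. intros v [r [-> [x [y [phi [Hx [Hy [Hne [[_ [HD1 HD2]] ->]]]]]]]]]. simpl.
  pose proof (neq_norm_pos k K opens _ _ Ht Hc Hi Hx Hy Hne).
  rewrite HD1, HD2, sabs_ofR. rewrite Rabs_right. right; field; lra. apply Rle_ge, pow2_ge_0.
Qed.

Theorem proposition2p8 (k : field_kind) (K : Type) (opens : (K -> Prop) -> Prop) :
  is_topology opens -> is_compact opens -> is_hausdorff opens -> inhabited K ->
  nL k K opens = Fin 1.
Proof.
  intros Ht Hc _ Hi.
  set (W := fun w => exists T, in_Lip0 k K opens T /\ lip_norm k K opens T = Fin 1 /\ w = omega k K opens T).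
  assert (Hid : omega k K opens (fun f => f) = Fin 1).
  { apply Rbar_le_antisym. apply omega_id_le; auto.
    apply omega_ge1; auto. apply id_Lip0. apply id_lip; auto. }
  assert (HW : Rbar_is_inf W (Fin 1)).
  { split.
    - intros w [T [HT [HL ->]]]. apply omega_ge1; auto.
    - intros u Hu. apply Hu. exists (fun f => f). split. apply id_Lip0. split. apply id_lip; auto. auto. }
  unfold nL, Inf. fold W.
  assert (HI := epsilon_spec (inhabits PInf) (Rbar_is_inf W) (ex_intro _ _ HW)).
  exact (inf_unique W _ _ HI HW).
Qed.
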